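(* Let $M$ be a multigraph with $n$ vertices. Then $M$ is the double competition multigraph of some digraph (loops allowed) if and only if there exist an ordering $(v_1,\ldots,v_n)$ of the vertices of $M$ and a double indexed edge clique partition $\{S_{ij} \mid i,j\in[n]\}$ of $M$ such that the following condition holds: (I) for any $i,j\in[n]$, if $|A_i\cap B_j|\ge 2$, then $A_i\cap B_j = S_{ij}$, where $A_i = S_{i*}\cup T^+_i$, $S_{i*} := \bigcup_{p\in[n]} S_{ip}$, $T^+_i := \{v_b \mid a,b\in[n],\ v_i\in S_{ab}\}$, and $B_j = S_{*j}\cup T^-_j$, $S_{*j} := \bigcup_{q\in[n]} S_{qj}$, $T^-_j := \{v_a \mid a,b\in[n],\ v_j\in S_{ab}\}$.
   Context: A digraph $D$ is a pair $(V(D),A(D))$ with $A(D)$ a set of ordered pairs of vertices (arcs); an arc $(v,v)$ is a loop. $N^+_D(x)=\{v\mid (x,v)\in A(D)\}$ and $N^-_D(x)=\{v\mid (v,x)\in A(D)\}$. A multigraph $M$ (without loops) is a vertex set $V(M)$ together with a function $m_M$ assigning to each unordered pair $\{x,y\}$ of distinct vertices a nonnegative integer, the number of edges between $x$ and $y$. The double competition multigraph of a digraph $D$ is the multigraph $M$ with $V(M)=V(D)$ and $m_M(\{x,y\}) = |N^+_D(x)\cap N^+_D(y)|\cdot|N^-_D(x)\cap N^-_D(y)|$ for distinct $x,y$. A clique of $M$ is a set of vertices that are pairwise adjacent (i.e. $m_M\ge 1$ on every pair of distinct elements); the empty set and singletons count as cliques. An edge clique partition of $M$ is a family (multiset) $\mathcal{F}$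 of cliques of $M$ such that any two distinct vertices $x,y$ are contained in exactly $m_M(\{x,y\})$ members of $\mathcal{F}$; a double indexed edge clique partition $\{S_{ij}\mid i,j\in[n]\}$ is such a family indexed by pairs $(i,j)\in[n]\times[n]$ (members may be empty). $[n]=\{1,\ldots,n\}$. *)

(* Defs.v *)
From mathcomp Require Import all_boot.
Set Implicit Arguments. Unset Strict Implicit. Unset Printing Implicit Defensive.

(* A multigraph on a finite vertex type V is a symmetric function
   m : V -> V -> nat; only values on pairs of distinct vertices matter. *)
Definition multigraph (V : finType) (m : V -> V -> nat) : Prop :=
  forall x y, m x y = m y x.

Definition out_nbhd (V : finType) (D : rel V) (x : V) : {set V} :=
  [set v | D x v].
Definition in_nbhd (V : finType) (D : rel V) (x : V) : {set V} :=
  [set v | D v x].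

Definition is_dcm (V : finType) (D : rel V) (m : V -> V -> nat) : Prop :=
  forall x y, x != y ->
    m x y = #|out_nbhd D x :&: out_nbhd D y| * #|in_nbhd D x :&: in_nbhd D y|.

Definition is_clique (V : finType) (m : V -> V -> nat) (S : {set V}) : Prop :=
  forall x y, x \in S -> y \in S -> x != y -> 1 <= m x y.

Definition double_indexed_ecp (V : finType) (n : nat) (m : V -> V -> nat)
    (S : 'I_n -> 'I_n -> {set V}) : Prop :=
  (forall i j, is_clique m (S i j)) /\
  (forall x y, x != y ->
     #|[set p : 'I_n * 'I_n | (x \in S p.1 p.2) && (y \in S p.1 p.2)]| = m x y).

Definition Srow (V : finType) (n : nat) (S : 'I_n -> 'I_n -> {set V}) (i : 'I_n)
  : {set V} := \bigcup_(p : 'I_n) S i p.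
Definition Scol (V : finType) (n : nat) (S : 'I_n -> 'I_n -> {set V}) (j : 'I_n)
  : {set V} := \bigcup_(q : 'I_n) S q j.

Definition Tplus (V : finType) (n : nat) (v : 'I_n -> V)
    (S : 'I_n -> 'I_n -> {set V}) (i : 'I_n) : {set V} :=
  [set v b | b : 'I_n & [exists a : 'I_n, v i \in S a b]].
Definition Tminus (V : finType) (n : nat) (v : 'I_n -> V)
    (S : 'I_n -> 'I_n -> {set V}) (j : 'I_n) : {set V} :=
  [set v a | a : 'I_n & [exists b : 'I_n, v j \in S a b]].

Definition Aset (V : finType) (n : nat) (v : 'I_n -> V)
    (S : 'I_n -> 'I_n -> {set V}) (i : 'I_n) : {set V} :=
  Srow S i :|: Tplus v S i.
Definition Bset (V : finType) (n : nat) (v : 'I_n -> V)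
    (S : 'I_n -> 'I_n -> {set V}) (j : 'I_n) : {set V} :=
  Scol S j :|: Tminus v S j.

Definition condition_I (V : finType) (n : nat) (v : 'I_n -> V)
    (S : 'I_n -> 'I_n -> {set V}) : Prop :=
  forall i j : 'I_n, 2 <= #|Aset v S i :&: Bset v S j| ->
    Aset v S i :&: Bset v S j = S i j.

(* Main.v *)
Require Import Defs.
From mathcomp Require Import all_boot.

Lemma card_bij (V : finType) (v : 'I_#|V| -> V) (P : pred V) :
  bijective v -> #|[set i | P (v i)]| = #|[set u | P u]|.
Proof.
move=> bv; rewrite -(card_imset _ (bij_inj bv)); apply: eq_card => u.
rewrite [in RHS]inE; apply/imsetP/idP => [[i]|Pu].
  by rewrite inE => Pi ->.
case: bv => w vK wK; exists (w u); by rewrite ?inE wK.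
Qed.

Lemma card_pairs (n : nat) (P Q : pred 'I_n) :
  #|[set p : 'I_n * 'I_n | P p.1 && Q p.2]| = #|[set i | P i]| * #|[set j | Q j]|.
Proof. by rewrite -cardsX; apply: eq_card => [[i j]]; rewrite !inE. Qed.

Theorem theorem1 (V : finType) (m : V -> V -> nat) :
  multigraph m ->
  (exists D : rel V, is_dcm D m) <->
  (exists (v : 'I_#|V| -> V) (S : 'I_#|V| -> 'I_#|V| -> {set V}),
     bijective v /\ double_indexed_ecp m S /\ condition_I v S).
Proof.
move=> _; split.
- case=> D hD.
  pose v : 'I_#|V| -> V := enum_val.
  have bv : bijective v by exists enum_rank; [exact: enum_valK | exact: enum_rankK].
  pose S := fun i j => [set x | D (v i) x && D x (v j)].
  exists v, S; split; first done.
  split; [split|].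
  + move=> i j x y; rewrite !inE => /andP[xi xj] /andP[yi yj] nxy.
    rewrite hD // muln_gt0; apply/andP; split; apply/card_gt0P;
      [exists (v j) | exists (v i)]; by rewrite !inE ?xj ?yj ?xi ?yi.
  + move=> x y nxy; rewrite hD //.
    rewrite (_ : [set p : 'I_#|V| * 'I_#|V| | (x \in S p.1 p.2) && (y \in S p.1 p.2)]
               = [set p | (D (v p.1) x && D (v p.1) y) && (D x (v p.2) && D y (v p.2))]);
      last first.
      apply/setP=> p; rewrite !inE.
      by case: (D (v p.1) x); case: (D (v p.1) y); case: (D x (v p.2)); case: (D y (v p.2)).
    rewrite (@card_pairs _ (fun i => D (v i) x && D (v i) y) (fun j => D x (v j) && D y (v j))) (@card_bij _ v (fun u => D u x && D u y)) //.
    rewrite (@card_bij _ v (fun u => D x u && D y u)) // mulnC.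
    by congr (_ * _); apply: eq_card => u; rewrite !inE.
  + move=> i j _.
    have hA : forall x, x \in Aset v S i -> D (v i) x.
      move=> x; rewrite inE => /orP[/bigcupP[p _]|/imsetP[b]]; rewrite !inE.
        by case/andP.
      by move=> /existsP[a]; rewrite inE => /andP[_ h] ->.
    have hB : forall x, x \in Bset v S j -> D x (v j).
      move=> x; rewrite inE => /orP[/bigcupP[p _]|/imsetP[b]]; rewrite !inE.
        by case/andP.
      by move=> /existsP[a]; rewrite inE => /andP[h _] ->.
    apply/eqP; rewrite eqEsubset; apply/andP; split; apply/subsetP=> x.
      by rewrite in_setI => /andP[/hA h1 /hB h2]; rewrite inE h1 h2.
    move=> xS; rewrite inE; apply/andP; split; rewrite inE; apply/orP; left;
      apply/bigcupP; [exists j | exists i] => //.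
- case=> v [S [bv [[hcl hcnt] hI]]].
  case: (bv) => w vK wK.
  pose D := [rel x y | [exists j, y \in S (w x) j] || [exists i, x \in S i (w y)]].
  exists D.
  have F1 : forall i y, D (v i) y = (y \in Aset v S i).
    move=> i y; rewrite /= vK /Aset /Srow /Tplus inE; congr orb.
      by apply/existsP/bigcupP => [[p h]|[p _ h]]; exists p.
    apply/existsP/imsetP => [[a h]|[b]].
      exists (w y); last by rewrite wK.
      by rewrite inE; apply/existsP; exists a.
    by rewrite inE => /existsP[a h] ->; exists a; rewrite vK.
  have F2 : forall j x, D x (v j) = (x \in Bset v S j).
    move=> j x; rewrite /= vK /Bset /Scol /Tminus inE orbC; congr orb.
      by apply/existsP/bigcupP => [[p h]|[p _ h]]; exists p.
    apply/existsP/imsetP => [[a h]|[b]].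
      exists (w x); last by rewrite wK.
      by rewrite inE; apply/existsP; exists a.
    by rewrite inE => /existsP[a h] ->; exists a; rewrite vK.
  clearbody D; move=> x y nxy.
  rewrite -(hcnt x y nxy).
  rewrite (_ : [set p : 'I_#|V| * 'I_#|V| | (x \in S p.1 p.2) && (y \in S p.1 p.2)]
             = [set p | (D (v p.1) x && D (v p.1) y) && (D x (v p.2) && D y (v p.2))]);
    last first.
    apply/setP=> -[i j]; rewrite !inE /= !F1 !F2.
    have sub : forall z, z \in S i j -> (z \in Aset v S i) && (z \in Bset v S j).
      move=> z zS; rewrite !inE; apply/andP; split; apply/orP; left;
        apply/bigcupP; [exists j | exists i] => //.
    apply/andP/idP => [[/sub/andP[xa xb] /sub/andP[ya yb]]|].
      by rewrite xa xb ya yb.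
    case/andP => /andP[xa ya] /andP[xb yb].
    have h2 : 2 <= #|Aset v S i :&: Bset v S j|.
      have : [set x; y] \subset Aset v S i :&: Bset v S j.
        by apply/subsetP=> z; rewrite in_set2 in_setI => /orP[]/eqP->; rewrite ?xa ?xb ?ya ?yb.
      by move/subset_leq_card; rewrite cards2 nxy.
    by rewrite -(hI i j h2) !in_setI xa ya xb yb.
  rewrite (@card_pairs _ (fun i => D (v i) x && D (v i) y) (fun j => D x (v j) && D y (v j))) (@card_bij _ v (fun u => D u x && D u y)) //.
  rewrite (@card_bij _ v (fun u => D x u && D y u)) // mulnC.
  by congr (_ * _); apply: eq_card => u; rewrite !inE.
Qed.
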